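(* For any generalized connection $D$ and compatible $E$-connection $D^{S}$, the operator \begin{equation*} d\!\!\!/ = D\!\!\!\!/^{\,S} + \frac14 \gamma_T \end{equation*} satisfies conditions (i) $[[d\!\!\!/,f],\gamma_e]=\pi(e)(f)$ and (ii) $[[d\!\!\!/,\gamma_{e_1}],\gamma_{e_2}]=\gamma_{[e_1,e_2]}$ for all $f\in C^\infty(M)$, $e,e_1,e_2\in\Gamma(E)$. Here $T \in \Gamma(\wedge^3E^* )\cong \Gamma(\wedge^3E)\subset \Gamma (\mathrm{Cl}(E))$ denotes the torsion of $D$.
   Context: Let $E\to M$ be an oriented Courant algebroid with anchor $\pi:E\to TM$, Dorfman bracket $[\cdot,\cdot]$ and scalar product $\langle\cdot,\cdot\rangle$ of neutral signature, and $S$ a bundle of irreducible $\mathrm{Cl}(E)$-modules (Clifford relation $e^2=\langle e,e\rangle$) with action $a\mapsto\gamma_a$; $[\cdot,\cdot]$ on operators is the super commutator $[A,B]=AB-(-1)^{\deg A\deg B}BA$. A generalized connection is an $\mathbb R$-linear $D:\Gamma(E)\to\Gamma(E^*\otimes E)$ with $D_e(fv)=\pi(e)(f)v+fD_ev$, compatible with $\langle\cdot,\cdot\rangle$; its torsion $T(u,v)=D_uv-D_vu-[u,v]+(Du)^*v$ is a 3-form $T(u,v,w)=\langle T(u,v),w\rangle$, identified with an element of $\wedge^3E\subset\mathrm{Cl}(E)$ via $E\cong E^*$. An $E$-connection $D^S$ on $S$ is compatible with $D$ if $D^S_e(as)=(D_ea)s+aD^S_es$. The Dirac operator is $D\!\!\!\!/^{\,S}=\frac12\sum_{i}\tilde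 e_iD^S_{e_i}$, with $(e_i)$ a local frame of $E$ and $(\tilde e_i)$ the metrically dual frame, $\langle e_i,\tilde e_j\rangle=\delta_{ij}$. *)

(* Defs.v *)
(* Algebraic (Serre-Swan style) model of the data:
   A  = ring of smooth functions C^oo(M) (a commutative R-algebra, R = reals),
   E  = Gamma(E), S = Gamma(S) as A-modules. *)
From HB Require Import structures.
From mathcomp Require Import all_boot all_order all_algebra.
From mathcomp Require Import reals.
Set Implicit Arguments. Unset Strict Implicit. Unset Printing Implicit Defensive.
Import Order.TTheory GRing.Theory Num.Theory.
Local Open Scope ring_scope.

Section Defs.
Variables (R : realType) (A : comAlgType R).

(* a vector field = an R-linear derivation of A *)
Definition derivation (X : A -> A) : Prop :=
  [/\ forall f g, X (f + g) = X f + X g,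
      forall (r : R) f, X (r *: f) = r *: X f
    & forall f g, X (f * g) = f * X g + X f * g].

Variable (E : lmodType A).

(* Courant algebroid (Dorfman bracket br, anchor pi, scalar product ip) *)
Record courant (pi : E -> A -> A) (br : E -> E -> E) (ip : E -> E -> A) : Prop := {
  ip_sym : forall u v, ip u v = ip v u;
  ip_linl : forall f u v w, ip (f *: u + v) w = f * ip u w + ip v w;
  ip_nondeg : forall u, (forall v, ip u v = 0) -> u = 0;
  pi_der : forall e, derivation (pi e);
  pi_linl : forall f u v g, pi (f *: u + v) g = f * pi u g + pi v g;
  br_addl : forall u v w, br (u + v) w = br u w + br v w;
  br_addr : forall u v w, br u (v + w) = br u v + br u w;
  br_leibniz : forall u v f, br u (f *: v) = f *: br u v + pi u f *: v;
  br_jacobi : forall u v w, br u (br v w) = br (br u v) w + br v (br u w);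
  br_ip : forall u v w, pi u (ip v w) = ip (br u v) w + ip v (br u w);
  br_sym : forall u v w, ip (br u v + br v u) w = pi w (ip u v)
}.

(* generalized connection D : Gamma(E) -> Gamma(E^* (x) E), D u v = D_u v *)
Record gen_connection (pi : E -> A -> A) (ip : E -> E -> A) (D : E -> E -> E) : Prop := {
  gc_linl : forall f u v w, D (f *: u + v) w = f *: D u w + D v w;
  gc_addr : forall e u v, D e (u + v) = D e u + D e v;
  gc_leibniz : forall e f v, D e (f *: v) = pi e f *: v + f *: D e v;
  gc_metric : forall e u v, pi e (ip u v) = ip (D e u) v + ip u (D e v)
}.

(* torsion as a 3-form:
   T(u,v,w) = < D_u v - D_v u - [u,v] + (Du)^* v , w >, with <(Du)^* v, w> = <D_w u, v> *)
Definition torsion3 (br : E -> E -> E) (ip : E -> E -> A) (D : E -> E -> E)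
  (u v w : E) : A := ip (D u v - D v u - br u v) w + ip (D w u) v.

Definition dual_frame (ip : E -> E -> A) (n : nat) (e et : 'I_n -> E) : Prop :=
  forall v, v = \sum_(i < n) ip (et i) v *: e i.

Variable (S : lmodType A).

Record clifford_module (ip : E -> E -> A) (gam : E -> S -> S) : Prop := {
  cm_lin_e : forall f u v s, gam (f *: u + v) s = f *: gam u s + gam v s;
  cm_lin_s : forall e f s t, gam e (f *: s + t) = f *: gam e s + gam e t;
  cm_clifford : forall e s, gam e (gam e s) = ip e e *: s
}.

Record e_connection (pi : E -> A -> A) (DS : E -> S -> S) : Prop := {
  ec_linl : forall f u v s, DS (f *: u + v) s = f *: DS u s + DS v s;
  ec_addr : forall e s t, DS e (s + t) = DS e s + DS e t;
  ec_leibniz : forall e f s, DS e (f *: s) = pi e f *: s + f *: DS e s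
}.

Definition compatible (gam : E -> S -> S) (D : E -> E -> E) (DS : E -> S -> S) : Prop :=
  forall e a s, DS e (gam a s) = gam (D e a) s + gam a (DS e s).

Definition dirac (gam : E -> S -> S) (DS : E -> S -> S) (n : nat) (e et : 'I_n -> E)
  (s : S) : S := ((2 : R)^-1)%:A *: \sum_(i < n) gam (et i) (DS (e i) s).

(* Clifford action of the 3-form T, via T in wedge^3 E* = wedge^3 E in Cl(E):
   gamma_T = (1/6) sum_{i,j,k} T(e_i,e_j,e_k) et_i et_j et_k *)
Definition gammaT (br : E -> E -> E) (ip : E -> E -> A) (D : E -> E -> E)
  (gam : E -> S -> S) (n : nat) (e et : 'I_n -> E) (s : S) : S :=
  ((6 : R)^-1)%:A *: \sum_(i < n) \sum_(j < n) \sum_(k < n)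
     torsion3 br ip D (e i) (e j) (e k) *: gam (et i) (gam (et j) (gam (et k) s)).

Definition dslash br ip D gam DS n (e et : 'I_n -> E) (s : S) : S :=
  dirac gam DS e et s + ((4 : R)^-1)%:A *: gammaT br ip D gam e et s.

(* super commutator of operators of parities pa, pb (true = odd) *)
Definition scomm (pa pb : bool) (P Q : S -> S) : S -> S :=
  fun s => P (Q s) - ((-1 : A) ^+ (pa && pb)) *: Q (P s).

Definition mulop (f : A) : S -> S := fun s => f *: s.

End Defs.

(* Main.v *)
Require Import Defs.
From HB Require Import structures.
From mathcomp Require Import all_boot all_order all_algebra.
From mathcomp Require Import reals.
From mathcomp Require Import ring.
Import Order.TTheory GRing.Theory Num.Theory.
Local Open Scope ring_scope.

Section Proof7.
Variables (R : realType) (A : comAlgType R) (E S : lmodType A)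
  (pi : E -> A -> A) (br : E -> E -> E) (ip : E -> E -> A)
  (gam : E -> S -> S) (D : E -> E -> E) (DS : E -> S -> S)
  (n : nat) (e et : 'I_n -> E).
Hypotheses (HC : courant pi br ip) (HM : clifford_module ip gam)
  (HD : gen_connection pi ip D) (HE : e_connection pi DS)
  (Hcomp : compatible gam D DS) (Hfr : dual_frame ip e et).

Lemma zero_dbl (V : zmodType) (x : V) : x = x + x -> x = 0.
Proof. by move=> h; apply/eqP; rewrite -(addrI x (esym (etrans (addr0 x) h))). Qed.

Lemma ip0l w : ip 0 w = 0.
Proof. apply: zero_dbl; have := ip_linl HC 1 0 0 w. by rewrite scaler0 addr0 mul1r. Qed.
Lemma ipDl u v w : ip (u + v) w = ip u w + ip v w.
Proof. by have := ip_linl HC 1 u v w; rewrite scale1r mul1r. Qed.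
Lemma ipZl f u w : ip (f *: u) w = f * ip u w.
Proof. by have := ip_linl HC f u 0 w; rewrite addr0 ip0l addr0. Qed.
Lemma ipNl u w : ip (- u) w = - ip u w.
Proof. by rewrite -scaleN1r ipZl mulN1r. Qed.
Lemma ipBl u v w : ip (u - v) w = ip u w - ip v w.
Proof. by rewrite ipDl ipNl. Qed.
Lemma ip_suml I r (P : pred I) (F : I -> E) w :
  ip (\sum_(i <- r | P i) F i) w = \sum_(i <- r | P i) ip (F i) w.
Proof. exact: (big_morph (fun u => ip u w) (fun u v => ipDl u v w) (ip0l w)). Qed.
Lemma ipDr u v w : ip w (u + v) = ip w u + ip w v.
Proof. by rewrite !(ip_sym HC w) ipDl. Qed.
Lemma ipZr f u w : ip w (f *: u) = f * ip w u.
Proof. by rewrite !(ip_sym HC w) ipZl. Qed.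
Lemma ip_sumr I r (P : pred I) (F : I -> E) w :
  ip w (\sum_(i <- r | P i) F i) = \sum_(i <- r | P i) ip w (F i).
Proof. rewrite (ip_sym HC) ip_suml; apply: eq_bigr => i _; exact: (ip_sym HC). Qed.

Lemma pi0 g : pi 0 g = 0.
Proof. apply: zero_dbl; have := pi_linl HC 1 0 0 g. by rewrite scaler0 addr0 mul1r. Qed.
Lemma piD u v g : pi (u + v) g = pi u g + pi v g.
Proof. by have := pi_linl HC 1 u v g; rewrite scale1r mul1r. Qed.
Lemma piZ f u g : pi (f *: u) g = f * pi u g.
Proof. by have := pi_linl HC f u 0 g; rewrite addr0 pi0 addr0. Qed.
Lemma pi_sum I r (P : pred I) (F : I -> E) g :
  pi (\sum_(i <- r | P i) F i) g = \sum_(i <- r | P i) pi (F i) g.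
Proof. exact: (big_morph (fun u => pi u g) (fun u v => piD u v g) (pi0 g)). Qed.

Lemma D0l w : D 0 w = 0.
Proof. apply: zero_dbl; have := gc_linl HD 1 0 0 w. by rewrite scaler0 addr0 scale1r. Qed.
Lemma DDl u v w : D (u + v) w = D u w + D v w.
Proof. by have := gc_linl HD 1 u v w; rewrite !scale1r. Qed.
Lemma DZl f u w : D (f *: u) w = f *: D u w.
Proof. by have := gc_linl HD f u 0 w; rewrite addr0 D0l addr0. Qed.
Lemma D_suml I r (P : pred I) (F : I -> E) w :
  D (\sum_(i <- r | P i) F i) w = \sum_(i <- r | P i) D (F i) w.
Proof. exact: (big_morph (fun u => D u w) (fun u v => DDl u v w) (D0l w)). Qed.

Lemma DS0l s : DS 0 s = 0.
Proof. apply: zero_dbl; have := ec_linl HE 1 0 0 s. by rewrite scaler0 addr0 scale1r. Qed.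
Lemma DSDl u v s : DS (u + v) s = DS u s + DS v s.
Proof. by have := ec_linl HE 1 u v s; rewrite !scale1r. Qed.
Lemma DSZl f u s : DS (f *: u) s = f *: DS u s.
Proof. by have := ec_linl HE f u 0 s; rewrite addr0 DS0l addr0. Qed.
Lemma DS_suml I r (P : pred I) (F : I -> E) s :
  DS (\sum_(i <- r | P i) F i) s = \sum_(i <- r | P i) DS (F i) s.
Proof. exact: (big_morph (fun u => DS u s) (fun u v => DSDl u v s) (DS0l s)). Qed.
Lemma DSD x s t : DS x (s + t) = DS x s + DS x t.
Proof. exact: (ec_addr HE x s t). Qed.
Lemma DS0r x : DS x 0 = 0.
Proof. by apply: zero_dbl; rewrite -DSD addr0. Qed.
Lemma DSN x s : DS x (- s) = - DS x s.
Proof. by apply/eqP; rewrite -addr_eq0 -DSD addNr DS0r. Qed.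
Lemma DSB x s t : DS x (s - t) = DS x s - DS x t.
Proof. by rewrite DSD DSN. Qed.
Lemma DSZ x f s : DS x (f *: s) = pi x f *: s + f *: DS x s.
Proof. exact: (ec_leibniz HE x f s). Qed.

Lemma gam0l s : gam 0 s = 0.
Proof. apply: zero_dbl; have := cm_lin_e HM 1 0 0 s. by rewrite scaler0 addr0 scale1r. Qed.
Lemma gamDl u v s : gam (u + v) s = gam u s + gam v s.
Proof. by have := cm_lin_e HM 1 u v s; rewrite !scale1r. Qed.
Lemma gamZl f u s : gam (f *: u) s = f *: gam u s.
Proof. by have := cm_lin_e HM f u 0 s; rewrite addr0 gam0l addr0. Qed.
Lemma gamNl u s : gam (- u) s = - gam u s.
Proof. by rewrite -scaleN1r gamZl scaleN1r. Qed.
Lemma gamBl u v s : gam (u - v) s = gam u s - gam v s.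
Proof. by rewrite gamDl gamNl. Qed.
Lemma gam_suml I r (P : pred I) (F : I -> E) s :
  gam (\sum_(i <- r | P i) F i) s = \sum_(i <- r | P i) gam (F i) s.
Proof. exact: (big_morph (fun u => gam u s) (fun u v => gamDl u v s) (gam0l s)). Qed.
Lemma gam0r x : gam x 0 = 0.
Proof. apply: zero_dbl; have := cm_lin_s HM x 1 0 0. by rewrite scaler0 addr0 scale1r. Qed.
Lemma gamDr x s t : gam x (s + t) = gam x s + gam x t.
Proof. by have := cm_lin_s HM x 1 s t; rewrite !scale1r. Qed.
Lemma gamZr x f s : gam x (f *: s) = f *: gam x s.
Proof. by have := cm_lin_s HM x f s 0; rewrite addr0 gam0r addr0. Qed.
Lemma gamNr x s : gam x (- s) = - gam x s.
Proof. by rewrite -scaleN1r gamZr scaleN1r. Qed.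
Lemma gamBr x s t : gam x (s - t) = gam x s - gam x t.
Proof. by rewrite gamDr gamNr. Qed.
Lemma gam_sumr I r (P : pred I) (F : I -> S) x :
  gam x (\sum_(i <- r | P i) F i) = \sum_(i <- r | P i) gam x (F i).
Proof. exact: (big_morph (gam x) (gamDr x) (gam0r x)). Qed.

Lemma ipNr u w : ip w (- u) = - ip w u.
Proof. by rewrite !(ip_sym HC w) ipNl. Qed.

Lemma anticomm a b s : gam a (gam b s) + gam b (gam a s) = (ip a b *+ 2) *: s.
Proof.
have h := cm_clifford HM (a + b) s.
rewrite !gamDl !gamDr !(cm_clifford HM) ipDl !ipDr (ip_sym HC b a) in h.
rewrite !scalerDl in h.
rewrite mulr2n scalerDl.
move: h.
set X := gam a (gam b s). set Y := gam b (gam a s). set P := ip a a *: s. set Q := ip b b *: s. set Z := ip a b *: s.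
move=> h.
have : P + (X + Y) + Q = P + (Z + Z) + Q.
  by move: h; rewrite !addrA.
by move/addIr/addrI.
Qed.


Lemma frame_rev v : v = \sum_(i < n) ip (e i) v *: et i.
Proof.
apply/eqP; rewrite -subr_eq0; apply/eqP; apply: (ip_nondeg HC) => w.
rewrite ipBl ip_suml {1}(Hfr w) ip_sumr.
rewrite -sumrB big1 // => i _.
by rewrite ipZl ipZr mulrC (ip_sym HC (e i)) subrr.
Qed.

Lemma invnat k (v : S) : ((k.+1%:R : R)^-1)%:A *: (v *+ k.+1) = v.
Proof.
rewrite -scalerMnr scalerMnl.
have -> : (((k.+1%:R : R)^-1)%:A : A) *+ k.+1 = (((k.+1%:R : R)^-1) *+ k.+1)%:A.
  by rewrite scalerMnl.
rewrite -[(_^-1) *+ _]mulr_natr mulVf ?pnatr_eq0 //.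
by rewrite !scale1r.
Qed.

Definition T3 := torsion3 br ip D.
Definition Dsl := dslash br ip D gam DS e et.

Lemma gammaT_Z f s : gammaT br ip D gam e et (f *: s) = f *: gammaT br ip D gam e et s.
Proof.
rewrite /gammaT scalerA mulrC -scalerA; congr (_ *: _).
rewrite scaler_sumr; apply: eq_bigr => i _.
rewrite scaler_sumr; apply: eq_bigr => j _.
rewrite scaler_sumr; apply: eq_bigr => k _.
by rewrite !gamZr !scalerA mulrC.
Qed.

Lemma cancelG (X Y G : S) (c f : A) : X + c *: (f *: G) - f *: (Y + c *: G) = X - f *: Y.
Proof. by rewrite scalerDr !scalerA mulrC opprD addrACA subrr addr0. Qed.

Lemma Dsl_f f s : Dsl (f *: s) - f *: Dsl s =
  ((2:R)^-1)%:A *: gam (\sum_(i < n) pi (e i) f *: et i) s.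
Proof.
rewrite /Dsl /dslash gammaT_Z cancelG.
rewrite /dirac (scalerA f) (mulrC f) -scalerA -scalerBr.
congr (_ *: _).
rewrite scaler_sumr -sumrB gam_suml; apply: eq_bigr => i _.
by rewrite DSZ gamDr !gamZr addrK gamZl.
Qed.

Lemma part1 f x s :
  scomm true true (scomm true false Dsl (@mulop _ _ S f)) (gam x) s = pi x f *: s.
Proof.
rewrite /scomm /mulop /= expr0 expr1 !scale1r scaleN1r opprK.
rewrite !Dsl_f gamZr -scalerDr addrC anticomm -scalerMnl invnat.
congr (_ *: _).
rewrite ip_sumr [in RHS](Hfr x) pi_sum; apply: eq_bigr => i _.
by rewrite ipZr piZ mulrC (ip_sym HC).
Qed.


Lemma T3D3 u v w1 w2 : T3 u v (w1 + w2) = T3 u v w1 + T3 u v w2.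
Proof. rewrite /T3 /torsion3 !ipDr DDl (ipDl (D w1 u)). ring. Qed.
Lemma T3Z3 u v f w : T3 u v (f *: w) = f * T3 u v w.
Proof. rewrite /T3 /torsion3 !ipZr DZl ipZl; ring. Qed.
Lemma T303 u v : T3 u v 0 = 0.
Proof. by have := T3Z3 u v 0 0; rewrite scale0r mul0r. Qed.
Lemma T3_sum3 I r (P : pred I) (F : I -> E) u v :
  T3 u v (\sum_(i <- r | P i) F i) = \sum_(i <- r | P i) T3 u v (F i).
Proof. exact: (big_morph (T3 u v) (T3D3 u v) (T303 u v)). Qed.
Lemma T3_frame u v x : \sum_(k < n) ip (et k) x * T3 u v (e k) = T3 u v x.
Proof.
rewrite [in RHS](Hfr x) T3_sum3; apply: eq_bigr => k _; by rewrite T3Z3.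
Qed.

Lemma T3_12 u v w : T3 v u w = - T3 u v w.
Proof.
rewrite /T3 /torsion3 !ipBl.
have h1 := br_sym HC u v w; rewrite ipDl in h1.
have h2 := gc_metric HD w u v; rewrite (ip_sym HC u (D w v)) in h2.
have e1 : ip (br v u) w = pi w (ip u v) - ip (br u v) w by rewrite -h1 addrC addKr.
have e2 : ip (D w v) u = pi w (ip u v) - ip (D w u) v by rewrite h2 addrC addKr.
rewrite e1 e2; ring.
Qed.

Lemma T3_23 u v w : T3 u w v = - T3 u v w.
Proof.
rewrite /T3 /torsion3 !ipBl.
have h1 := br_ip HC u v w.
have h2 := gc_metric HD u v w.
have e1 : ip (br u w) v = pi u (ip v w) - ip (br u v) w by rewrite h1 (ip_sym HC v) addrC addKr.
have e2 : ip (D u w) v = pi u (ip v w) - ip (D u v) w by rewrite h2 (ip_sym HC v) addrC addKr.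
rewrite e1 e2; ring.
Qed.

Lemma T3_cyc u v w : T3 u v w = T3 v w u.
Proof. by rewrite (T3_23 v u w) (T3_12 u v w) opprK. Qed.


Lemma swap2 a c t : gam a (gam c t) = (ip a c *+ 2) *: t - gam c (gam a t).
Proof. by rewrite -anticomm addrK. Qed.

Lemma triple a b c s : gam a (gam b (gam c s)) - gam c (gam a (gam b s)) =
  (ip b c *+ 2) *: gam a s - (ip a c *+ 2) *: gam b s.
Proof.
rewrite (swap2 b c s) gamBr gamZr (swap2 a c (gam b s)).
by rewrite opprB addrA addrAC addrK.
Qed.

Lemma quad a b c x s :
  gam a (gam b (gam c (gam x s))) + gam x (gam a (gam b (gam c s))) =
  (ip c x *+ 2) *: gam a (gam b s) - (ip b x *+ 2) *: gam a (gam c s)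
  + (ip a x *+ 2) *: gam b (gam c s).
Proof.
rewrite (swap2 c x s) !gamBr !gamZr (swap2 b x (gam c s)) !gamBr !gamZr.
rewrite (swap2 a x (gam b (gam c s))).
set P := gam x _. set U := _ *: gam a (gam b s). set V := _ *: gam a (gam c s).
set W := _ *: gam b (gam c s).
by rewrite opprB !addrA [in LHS]addrAC subrK addrAC.
Qed.


Lemma dirac_anti x s : dirac gam DS e et (gam x s) + gam x (dirac gam DS e et s) =
  ((2:R)^-1)%:A *: \sum_(i < n) gam (et i) (gam (D (e i) x) s) + DS x s.
Proof.
rewrite /dirac gamZr gam_sumr -scalerDr.
have -> : \sum_(i < n) gam (et i) (DS (e i) (gam x s)) +
          \sum_(i < n) gam x (gam (et i) (DS (e i) s)) =
          \sum_(i < n) gam (et i) (gam (D (e i) x) s) +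
          (\sum_(i < n) ip (et i) x *: DS (e i) s) *+ 2.
  rewrite -sumrMnl -!big_split; apply: eq_bigr => i _ /=.
  by rewrite Hcomp gamDr -addrA anticomm -scalerMnl.
rewrite scalerDr invnat; congr (_ + _).
rewrite [in RHS](Hfr x) DS_suml; apply: eq_bigr => i _.
by rewrite DSZl.
Qed.

Lemma dirac_comm x y s :
  (dirac gam DS e et (gam x (gam y s)) + gam x (dirac gam DS e et (gam y s)))
  - gam y (dirac gam DS e et (gam x s) + gam x (dirac gam DS e et s)) =
  gam (D x y + \sum_(i < n) ip (D (e i) x) y *: et i - D y x) s.
Proof.
rewrite !dirac_anti gamDr gamZr gam_sumr.
rewrite opprD addrACA -scalerBr -sumrB.
have -> : \sum_(i < n) (gam (et i) (gam (D (e i) x) (gam y s)) -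
              gam y (gam (et i) (gam (D (e i) x) s))) =
          (\sum_(i < n) (ip (D (e i) x) y *: gam (et i) s -
              ip (et i) y *: gam (D (e i) x) s)) *+ 2.
  rewrite -sumrMnl; apply: eq_bigr => i _.
  by rewrite triple -!scalerMnl -mulrnBl.
rewrite invnat (Hcomp x y s) addrK sumrB.
have -> : \sum_(i < n) ip (et i) y *: gam (D (e i) x) s = gam (D y x) s.
  rewrite [in RHS](Hfr y) D_suml gam_suml; apply: eq_bigr => i _.
  by rewrite DZl gamZl.
rewrite gamBl gamDl gam_suml.
have -> : \sum_(i < n) gam (ip (D (e i) x) y *: et i) s =
          \sum_(i < n) ip (D (e i) x) y *: gam (et i) s.
  by apply: eq_bigr => i _; rewrite gamZl.
by rewrite addrC addrA.
Qed.


Lemma sum_sc (a b : 'I_n -> A) (v : S) :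
  \sum_(k < n) a k *: (b k *: v) = (\sum_(k < n) b k * a k) *: v.
Proof. rewrite scaler_suml; apply: eq_bigr => k _; by rewrite scalerA mulrC. Qed.

Lemma S1 x (F : 'I_n -> 'I_n -> S) :
  \sum_(i < n) \sum_(j < n) \sum_(k < n) T3 (e i) (e j) (e k) *: (ip (et k) x *: F i j)
  = \sum_(i < n) \sum_(j < n) T3 x (e i) (e j) *: F i j.
Proof.
apply: eq_bigr => i _; apply: eq_bigr => j _.
by rewrite sum_sc T3_frame (T3_cyc (e i)) (T3_cyc (e j)).
Qed.

Lemma S2 x (F : 'I_n -> 'I_n -> S) :
  \sum_(i < n) \sum_(j < n) \sum_(k < n) T3 (e i) (e j) (e k) *: (ip (et j) x *: F i k)
  = - \sum_(i < n) \sum_(k < n) T3 x (e i) (e k) *: F i k.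
Proof.
rewrite -sumrN; apply: eq_bigr => i _.
rewrite exchange_big -sumrN /=; apply: eq_bigr => k _.
have -> : \sum_(j < n) T3 (e i) (e j) (e k) *: (ip (et j) x *: F i k) =
          \sum_(j < n) (- T3 (e i) (e k) (e j)) *: (ip (et j) x *: F i k).
  by apply: eq_bigr => j _; rewrite (T3_23 (e i) (e k) (e j)).
rewrite sum_sc.
have -> : \sum_(j < n) ip (et j) x * - T3 (e i) (e k) (e j) =
          - \sum_(j < n) ip (et j) x * T3 (e i) (e k) (e j).
  by rewrite -sumrN; apply: eq_bigr => j _; rewrite mulrN.
by rewrite T3_frame (T3_cyc (e i)) (T3_cyc (e k)) scaleNr.
Qed.

Lemma S3 x (F : 'I_n -> 'I_n -> S) :
  \sum_(i < n) \sum_(j < n) \sum_(k < n) T3 (e i) (e j) (e k) *: (ip (et i) x *: F j k)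
  = \sum_(j < n) \sum_(k < n) T3 x (e j) (e k) *: F j k.
Proof.
rewrite exchange_big /=; apply: eq_bigr => j _.
rewrite exchange_big /=; apply: eq_bigr => k _.
have -> : \sum_(i < n) T3 (e i) (e j) (e k) *: (ip (et i) x *: F j k) =
          \sum_(i < n) T3 (e j) (e k) (e i) *: (ip (et i) x *: F j k).
  by apply: eq_bigr => i _; rewrite (T3_cyc (e i)).
by rewrite sum_sc T3_frame (T3_cyc (e j)) (T3_cyc (e k)).
Qed.


Definition G2 s (u v : 'I_n) := gam (et u) (gam (et v) s).

Lemma gT_anti x s :
  gammaT br ip D gam e et (gam x s) + gam x (gammaT br ip D gam e et s) =
  \sum_(i < n) \sum_(j < n) T3 x (e i) (e j) *: gam (et i) (gam (et j) s).
Proof.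
rewrite /gammaT gamZr -scalerDr -/T3.
have -> : \sum_(i < n) \sum_(j < n) \sum_(k < n)
      T3 (e i) (e j) (e k) *: gam (et i) (gam (et j) (gam (et k) (gam x s))) +
    gam x (\sum_(i < n) \sum_(j < n) \sum_(k < n)
      T3 (e i) (e j) (e k) *: gam (et i) (gam (et j) (gam (et k) s))) =
    (\sum_(i < n) \sum_(j < n) \sum_(k < n) T3 (e i) (e j) (e k) *: (ip (et k) x *: G2 s i j)
   - \sum_(i < n) \sum_(j < n) \sum_(k < n) T3 (e i) (e j) (e k) *: (ip (et j) x *: G2 s i k)
   + \sum_(i < n) \sum_(j < n) \sum_(k < n) T3 (e i) (e j) (e k) *: (ip (et i) x *: G2 s j k)) *+ 2.
  rewrite gam_sumr -big_split mulrnDl mulrnBl -!sumrMnl -sumrB -big_split; apply: eq_bigr => i _ /=.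
  rewrite gam_sumr -big_split -!sumrMnl -sumrB -big_split; apply: eq_bigr => j _ /=.
  rewrite gam_sumr -big_split -!sumrMnl -sumrB -big_split; apply: eq_bigr => k _ /=.
  rewrite gamZr -scalerDr quad /G2 -!scalerMnl -mulrnBl -mulrnDl.
  by rewrite -scalerMnr scalerDr scalerBr mulrnDl mulrnBl.
rewrite S1 S2 S3 opprK.
set K := \sum_(i < n) \sum_(j < n) T3 x (e i) (e j) *: G2 s i j.
have -> : (K + K + K) *+ 2 = K *+ 6 by rewrite -[K + K]mulr2n -mulrSr -mulrnA.
by rewrite invnat.
Qed.


Lemma gT_comm x y s :
  (gammaT br ip D gam e et (gam x (gam y s)) + gam x (gammaT br ip D gam e et (gam y s)))
  - gam y (gammaT br ip D gam e et (gam x s) + gam x (gammaT br ip D gam e et s)) =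
  - (gam (\sum_(j < n) T3 x y (e j) *: et j) s *+ 4).
Proof.
rewrite !gT_anti gam_sumr -sumrB.
have -> : \sum_(i < n) (\sum_(j < n) T3 x (e i) (e j) *: gam (et i) (gam (et j) (gam y s))
     - gam y (\sum_(j < n) T3 x (e i) (e j) *: gam (et i) (gam (et j) s))) =
   (\sum_(i < n) \sum_(j < n) T3 x (e i) (e j) *: (ip (et j) y *: gam (et i) s)
    - \sum_(i < n) \sum_(j < n) T3 x (e i) (e j) *: (ip (et i) y *: gam (et j) s)) *+ 2.
  rewrite mulrnBl -!sumrMnl -sumrB; apply: eq_bigr => i _.
  rewrite gam_sumr -sumrB -!sumrMnl -sumrB; apply: eq_bigr => j _.
  by rewrite gamZr -scalerBr triple -!scalerMnl -mulrnBl -scalerMnr scalerBr mulrnBl.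
have V : gam (\sum_(j < n) T3 x y (e j) *: et j) s =
         \sum_(j < n) T3 x y (e j) *: gam (et j) s.
  by rewrite gam_suml; apply: eq_bigr => j _; rewrite gamZl.
have -> : \sum_(i < n) \sum_(j < n) T3 x (e i) (e j) *: (ip (et j) y *: gam (et i) s) =
          - gam (\sum_(j < n) T3 x y (e j) *: et j) s.
  rewrite V -sumrN; apply: eq_bigr => i _.
  by rewrite sum_sc T3_frame (T3_23 x y (e i)) scaleNr.
have -> : \sum_(i < n) \sum_(j < n) T3 x (e i) (e j) *: (ip (et i) y *: gam (et j) s) =
          gam (\sum_(j < n) T3 x y (e j) *: et j) s.
  rewrite V exchange_big /=; apply: eq_bigr => j _.
  have -> : \sum_(i < n) T3 x (e i) (e j) *: (ip (et i) y *: gam (et j) s) =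
            \sum_(i < n) (- T3 x (e j) (e i)) *: (ip (et i) y *: gam (et j) s).
    by apply: eq_bigr => i _; rewrite (T3_23 x (e j) (e i)).
  rewrite sum_sc.
  have -> : \sum_(i < n) ip (et i) y * - T3 x (e j) (e i) =
            - \sum_(i < n) ip (et i) y * T3 x (e j) (e i).
    by rewrite -sumrN; apply: eq_bigr => i _; rewrite mulrN.
  by rewrite T3_frame (T3_23 x y (e j)) opprK.
set g := gam _ s.
by rewrite -opprD mulNrn -mulr2n -mulrnA.
Qed.


Lemma rearr (g : S -> S) (gD : forall u v, g (u + v) = g u + g v)
  (gZ : forall (k : A) u, g (k *: u) = k *: g u) (a b c d a' b' c' d' : S) (k : A) :
  a + k *: b + (c + k *: d) - g (a' + k *: b' + (c' + k *: d')) =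
  (a + c - g (a' + c')) + k *: (b + d - g (b' + d')).
Proof.
rewrite addrACA -scalerDr [a' + _ + _]addrACA -scalerDr (gD (a' + c')) gZ.
by rewrite scalerBr opprD addrACA.
Qed.

Lemma gam_Dsl x t : gam x (Dsl t) =
  gam x (dirac gam DS e et t) + ((4:R)^-1)%:A *: gam x (gammaT br ip D gam e et t).
Proof. by rewrite /Dsl /dslash gamDr (gamZr x _ (gammaT br ip D gam e et t)). Qed.

Lemma part2 x y s :
  scomm false true (scomm true true Dsl (gam x)) (gam y) s = gam (br x y) s.
Proof.
have inner : forall t, scomm true true Dsl (gam x) t = Dsl (gam x t) + gam x (Dsl t).
  by move=> t; rewrite /scomm /= expr1 scaleN1r opprK.
rewrite {1}/scomm /= expr0 scale1r !inner !gam_Dsl.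
rewrite /Dsl /dslash.
rewrite (@rearr (gam y) (gamDr y) (gamZr y)) dirac_comm gT_comm scalerN invnat -gamBl.
congr (gam _ s).
have hV : \sum_(j < n) T3 x y (e j) *: et j =
   (D x y - D y x - br x y) + \sum_(j < n) ip (D (e j) x) y *: et j.
  rewrite [in RHS](frame_rev (D x y - D y x - br x y)) -big_split; apply: eq_bigr => j _.
  by rewrite /T3 /torsion3 scalerDl (ip_sym HC (e j)).
rewrite hV. set P := \sum_(j < n) _.
rewrite [D x y - D y x - br x y + P]addrC opprD addrA [D x y + P - D y x - P]addrAC addrK.
by rewrite opprB addrC subrK.
Qed.

Lemma main_both :
  (forall (f : A) (x : E) (s : S),
     scomm true true (scomm true false (dslash br ip D gam DS e et) (@mulop _ _ S f))
           (gam x) s = pi x f *: s) /\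
  (forall (x1 x2 : E) (s : S),
     scomm false true (scomm true true (dslash br ip D gam DS e et) (gam x1))
           (gam x2) s = gam (br x1 x2) s).
Proof. split; [exact: part1 | exact: part2]. Qed.

End Proof7.

Theorem lemma7p4 (R : realType) (A : comAlgType R) (E S : lmodType A)
  (pi : E -> A -> A) (br : E -> E -> E) (ip : E -> E -> A)
  (gam : E -> S -> S) (D : E -> E -> E) (DS : E -> S -> S)
  (n : nat) (e et : 'I_n -> E) :
  courant pi br ip ->
  clifford_module ip gam ->
  gen_connection pi ip D ->
  e_connection pi DS ->
  compatible gam D DS ->
  dual_frame ip e et ->
  (forall (f : A) (x : E) (s : S),
     scomm true true (scomm true false (dslash br ip D gam DS e et) (@mulop _ _ S f))
           (gam x) s = pi x f *: s) /\
  (forall (x1 x2 : E) (s : S),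
     scomm false true (scomm true true (dslash br ip D gam DS e et) (gam x1))
           (gam x2) s = gam (br x1 x2) s).
Proof. move=> HC HM HD HE Hcomp Hfr; exact: (@main_both R A E S pi br ip gam D DS n e et HC HM HD HE Hcomp Hfr). Qed.
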